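(* Let $\Sigma$ be a finite alphabet. For every unranked ordered $\Sigma$-labeled tree $t$, $|\mathrm{hdag}(t)| \le \min(|\mathrm{dag}(t)|, |\mathrm{bdag}(t)|)$.
   Context: An unranked tree over $\Sigma$ is a finite rooted tree with nodes labeled in $\Sigma$ and linearly ordered children (arbitrary finite number). Size means number of edges. $\mathrm{dag}(t)$ is the minimal dag of $t$: its nodes are the distinct subtrees of $t$, and the node of a subtree $f(s_1,\dots,s_k)$ has $k$ ordered edges to the nodes of $s_1,\dots,s_k$; thus $|\mathrm{dag}(t)|$ equals the sum, over all distinct subtrees $s$ of $t$, of the number of children of the root of $s$. The first-child/next-sibling encoding $\mathrm{fcns}$ maps a sequence of unranked trees to a binary tree (each node has an optional left and optional right child): $\mathrm{fcns}(\varepsilon)$ is empty and $\mathrm{fcns}(t_1t_2\cdots t_n)=f(\mathrm{fcns}(u_1\cdots u_m),\mathrm{fcns}(t_2\cdots t_n))$ when $t_1=f(u_1,\dots,u_m)$ (left child = first child, right child = next sibling). $\mathrm{bdag}(t)$ is the minimal dag of $\mathrm{fcns}(t)$ (identical subtrees merged), and $|\mathrm{bdag}(t)|$ its number of edges (edges to absent children are not counted). Hybrid dag: for each distinct subtree $s=f(s_1,\dots,s_k)$ of $t$ with $k\ge1$ introduce a fresh symbol $A_s$ and the height-one tree $\rho_s=f(\alpha_1,\dots,\alpha_k)$, where $\alpha_i$ is the label of $s_i$ if $s_i$ is a single node and $\alpha_i=A_{s_i}$ otherwise (the $\alpha_i$ are leaves). Let $\rho'_s$ be $\rho_s$ with its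 root additionally marked by $A_s$. Then $\mathrm{hdag}(t)$ is the minimal dag of the forest consisting of the binary trees $\mathrm{fcns}(\rho'_s)$ (identical subtrees anywhere in the forest are merged), and $|\mathrm{hdag}(t)|$ is its number of edges (edges to absent children not counted). *)

(* Defs.v *)
From HB Require Import structures.
From mathcomp Require Import all_boot.
Set Implicit Arguments. Unset Strict Implicit. Unset Printing Implicit Defensive.

Inductive tree (S : Type) : Type := Node of S & seq (tree S).
Arguments Node {S} _ _.

Section Trees.
Variable S : eqType.

Definition label (t : tree S) : S := let: Node a _ := t in a.
Definition children (t : tree S) : seq (tree S) := let: Node _ ts := t in ts.

Fixpoint tree_eqb (t1 t2 : tree S) {struct t1} : bool :=
  match t1, t2 with
  | Node a ts, Node b us =>
    (a == b) &&
    (fix eql (ts us : seq (tree S)) {struct ts} : bool :=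
       match ts, us with
       | [::], [::] => true
       | t :: ts', u :: us' => tree_eqb t u && eql ts' us'
       | _, _ => false
       end) ts us
  end.

Fixpoint tree_ind' (P : tree S -> Type)
  (H : forall a ts, foldr (fun t acc => (P t * acc)%type) unit ts -> P (Node a ts))
  (t : tree S) {struct t} : P t :=
  match t with
  | Node a ts => H a ts
      ((fix go (ts : seq (tree S)) : foldr (fun t acc => (P t * acc)%type) unit ts :=
          match ts with
          | [::] => tt
          | u :: us => (tree_ind' H u, go us)
          end) ts)
  end.

Lemma tree_eqP : Equality.axiom tree_eqb.
Proof.
move=> t1; elim/tree_ind': t1 => a ts IH [b us] /=.
have eql : forall us, reflect (ts = us)
    ((fix eql (ts us : seq (tree S)) {struct ts} : bool :=
       match ts, us with
       | [::], [::] => true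
       | t :: ts', u :: us' => tree_eqb t u && eql ts' us'
       | _, _ => false
       end) ts us).
  elim: ts IH => [|t ts IHts] /= IH [|u us'] /=; try by constructor.
  case: IH => IHt IH; case: (IHt u) => [->|neq] /=; last by constructor; case.
  by case: (IHts IH us') => [->|neq]; constructor; [|case].
case: (a =P b) => [->|neq] /=; last by constructor; case.
by case: (eql us) => [->|neq]; constructor; [|case].
Qed.

HB.instance Definition _ := hasDecEq.Build (tree S) tree_eqP.

Fixpoint subtrees (t : tree S) : seq (tree S) :=
  let: Node _ ts := t in
  t :: (fix sub (ts : seq (tree S)) : seq (tree S) :=
          match ts with [::] => [::] | u :: us => subtrees u ++ sub us end) ts.

Definition dag_size (t : tree S) : nat :=
  sumn [seq size (children s) | s <- undup (subtrees t)].

End Trees.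

Inductive btree (L : Type) : Type :=
| BNil : btree L
| BNode : L -> btree L -> btree L -> btree L.
Arguments BNil {L}.

Section BTrees.
Variable L : eqType.

Fixpoint btree_eqb (b1 b2 : btree L) : bool :=
  match b1, b2 with
  | BNil, BNil => true
  | BNode a l r, BNode a' l' r' => (a == a') && btree_eqb l l' && btree_eqb r r'
  | _, _ => false
  end.

Lemma btree_eqP : Equality.axiom btree_eqb.
Proof.
elim=> [|a l IHl r IHr] [|a' l' r'] /=; try by constructor.
case: (a =P a') => [->|neq] /=; last by constructor; case.
case: (IHl l') => [->|neq] /=; last by constructor; case.
by case: (IHr r') => [->|neq]; constructor; [|case].
Qed.

HB.instance Definition _ := hasDecEq.Build (btree L) btree_eqP.

Fixpoint bsubtrees (b : btree L) : seq (btree L) :=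
  if b is BNode _ l r then b :: bsubtrees l ++ bsubtrees r else [::].

Definition bout (b : btree L) : nat :=
  if b is BNode _ l r then (l != BNil) + (r != BNil) else 0.

(* number of edges of the minimal dag of a forest of binary trees
   (identical subtrees anywhere in the forest merged) *)
Definition bdag_forest_size (bs : seq (btree L)) : nat :=
  sumn [seq bout u | u <- undup (flatten [seq bsubtrees b | b <- bs])].

End BTrees.

(* first-child/next-sibling encoding of a sequence of unranked trees:
   fcns [::] = BNil and fcns (Node f us :: ts') = BNode f (fcns us) (fcns ts')
   (see lemma fcns_cons below). *)
Fixpoint fcns_t (S : Type) (t : tree S) (rest : btree S) : btree S :=
  let: Node f us := t in
  BNode f ((fix go (us : seq (tree S)) : btree S :=
              match us with [::] => BNil | u :: us' => fcns_t u (go us') end) us)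
        rest.

Definition fcns (S : Type) (ts : seq (tree S)) : btree S := foldr (@fcns_t S) BNil ts.

Lemma fcns_nil (S : Type) : fcns (S := S) [::] = BNil.
Proof. by []. Qed.

Lemma fcns_cons (S : Type) (f : S) (us ts : seq (tree S)) :
  fcns (Node f us :: ts) = BNode f (fcns us) (fcns ts).
Proof. by rewrite /fcns /=; congr BNode; elim: us. Qed.

Section Sizes.
Variable S : eqType.

Definition bdag_size (t : tree S) : nat := bdag_forest_size [:: fcns [:: t]].

(* Labels of the hybrid-dag forest:
   inl (inl a)   : the symbol a of S (leaf alpha_i = label of a single-node s_i)
   inl (inr s)   : the fresh nonterminal A_s (leaf alpha_i = A_{s_i})
   inr (f, s)    : the root label f of rho_s additionally marked by A_s *)
Definition hlab := ((S + tree S) + (S * tree S))%type.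

Definition halpha (u : tree S) : hlab :=
  if children u is [::] then inl (inl (label u)) else inl (inr u).

(* fcns of a sequence of leaves with the given labels *)
Fixpoint leaf_chain (xs : seq hlab) : btree hlab :=
  if xs is x :: xs' then BNode x BNil (leaf_chain xs') else BNil.

Definition fcns_rho' (s : tree S) : btree hlab :=
  BNode (inr (label s, s)) (leaf_chain [seq halpha u | u <- children s]) BNil.

Definition hdag_size (t : tree S) : nat :=
  bdag_forest_size [seq fcns_rho' s | s <- undup (subtrees t) & children s != [::]].

End Sizes.

(* Main.v *)
Require Import Defs.
From mathcomp Require Import all_boot.
Set Implicit Arguments. Unset Strict Implicit. Unset Printing Implicit Defensive.

Section Gen.
Variable T : eqType.
Implicit Types (w : T -> nat).

Lemma sum_undup_le w (s : seq T) :
  sumn [seq w x | x <- undup s] <= sumn [seq w x | x <- s].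
Proof.
elim: s => //= x s IH; case: ifP => _ /=; last by rewrite leq_add2l.
exact: leq_trans IH (leq_addl _ _).
Qed.

Lemma sum_undup_sub w (Y X : seq T) : {subset Y <= X} ->
  sumn [seq w x | x <- undup Y] <= sumn [seq w x | x <- undup X].
Proof.
move=> sub.
have P := perm_filterC (mem Y) (undup X).
have -> : sumn [seq w x | x <- undup X] =
  sumn [seq w x | x <- [seq x <- undup X | mem Y x] ++ [seq x <- undup X | predC (mem Y) x]].
  by apply: perm_sumn; apply: perm_map; rewrite perm_sym P.
rewrite map_cat sumn_cat.
have -> : sumn [seq w x | x <- undup Y] = sumn [seq w x | x <- [seq x <- undup X | mem Y x]].
  apply: perm_sumn; apply: perm_map; apply: uniq_perm.
  - exact: undup_uniq.
  - exact/filter_uniq/undup_uniq.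
  move=> x; rewrite mem_filter !mem_undup /=.
  by case E: (x \in Y) => //=; rewrite (sub _ E).
exact: leq_addr.
Qed.

End Gen.

Section TreeLemmas.
Variable S : eqType.

Definition flat (ts : seq (tree S)) := flatten [seq subtrees u | u <- ts].

Lemma subtreesE (a : S) cs : subtrees (Node a cs) = Node a cs :: flat cs.
Proof. rewrite /= /flat; congr cons; elim: cs => //= u us ->; by []. Qed.

Lemma flat_cons f cs rest :
  flat (Node f cs :: rest) = Node f cs :: flat cs ++ flat rest.
Proof. rewrite {1}/flat map_cons. rewrite (_ : forall (a : seq (tree S)) b, flatten (a :: b) = a ++ flatten b) // subtreesE.
by []. Qed.

Lemma forest_ind (P : seq (tree S) -> Prop) :
  P [::] -> (forall f cs rest, P cs -> P rest -> P (Node f cs :: rest)) ->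
  forall ts, P ts.
Proof.
move=> H0 HS ts.
have [n] := ubnP (size (flat ts)); elim: n ts => // n IH [|[f cs] rest] //.
rewrite flat_cons /= size_cat ltnS => H.
apply: HS; apply: IH.
- exact: leq_ltn_trans (leq_addr _ _) H.
- exact: leq_ltn_trans (leq_addl _ _) H.
Qed.

Fixpoint unfcns (b : btree S) : seq (tree S) :=
  if b is BNode a l r then Node a (unfcns l) :: unfcns r else [::].

Lemma unfcnsK ts : unfcns (fcns ts) = ts.
Proof.
elim/forest_ind: ts => // f cs rest IH1 IH2.
by rewrite fcns_cons /= IH1 IH2.
Qed.

Lemma bsub_trans (X b : btree S) : b \in bsubtrees X ->
  {subset bsubtrees b <= bsubtrees X}.
Proof.
elim: X => // a l IHl r IHr /=; rewrite inE => /orP [/eqP -> //|].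
rewrite mem_cat => /orP [/IHl|/IHr] H y /H Hy; by rewrite inE mem_cat Hy ?orbT.
Qed.

Lemma bsub_self (b : btree S) : b != BNil -> b \in bsubtrees b.
Proof. by case: b => //= *; rewrite inE eqxx. Qed.

Lemma drop_in (ts : seq (tree S)) i : i < size ts ->
  fcns (drop i ts) \in bsubtrees (fcns ts).
Proof.
elim: ts i => // [[f cs]] rest IH [|i] Hi; rewrite fcns_cons.
  by rewrite bsub_self.
by rewrite /= inE mem_cat IH ?orbT.
Qed.

Lemma K (ts : seq (tree S)) s : s \in flat ts ->
  exists us, fcns (s :: us) \in bsubtrees (fcns ts).
Proof.
elim/forest_ind: ts => // f cs rest IH1 IH2.
rewrite flat_cons in_cons mem_cat => /orP [/eqP ->|/orP[/IH1|/IH2]].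
- by exists rest; apply: bsub_self; rewrite fcns_cons.
- by move=> [us Hus]; exists us; rewrite fcns_cons /= in_cons mem_cat Hus orbT.
- by move=> [us Hus]; exists us; rewrite fcns_cons /= in_cons mem_cat Hus !orbT.
Qed.

End TreeLemmas.

Section Hdag.
Variable S : eqType.

Lemma chain_sum (xs : seq (hlab S)) :
  sumn [seq bout u | u <- bsubtrees (leaf_chain xs)] = (size xs).-1.
Proof.
elim: xs => // x xs IH /=; rewrite IH.
by case: xs {IH} => //.
Qed.

Lemma chain_sub (xs : seq (hlab S)) y : y \in bsubtrees (leaf_chain xs) ->
  exists2 i, i < size xs & y = leaf_chain (drop i xs).
Proof.
elim: xs => // x xs IH /=; rewrite in_cons => /orP [/eqP ->|]; first by exists 0.
by move=> /IH [i Hi ->]; exists i.+1.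
Qed.

Lemma rho_sum (s : tree S) : children s != [::] ->
  sumn [seq bout u | u <- bsubtrees (fcns_rho' s)] = size (children s).
Proof.
case: s => a [|c cs] //= _.
have E (xs : seq (tree S)) : (leaf_chain [seq halpha u | u <- xs] != BNil) + (size xs).-1 = size xs by case: xs.
by rewrite cats0 chain_sum size_map /= !add0n addn0 E add1n.
Qed.

Definition h1 (z : btree S) : btree (hlab S) :=
  match unfcns z with
  | s :: _ => if children s != [::] then fcns_rho' s else BNil
  | [::] => BNil end.
Definition h2 (z : btree S) : btree (hlab S) := leaf_chain [seq halpha u | u <- unfcns z].

Lemma bout_h z : bout z = bout (h1 z) + bout (h2 z).
Proof.
case: z => // a l r; rewrite /h1 /h2 /=.
by case: l => [|? ? ?]; case: r => [|? ? ?].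
Qed.

End Hdag.

Lemma sum_flat (T : Type) (w : T -> nat) (L : seq (seq T)) :
  sumn (map w (flatten L)) = sumn [seq sumn (map w l) | l <- L].
Proof. by elim: L => //= l L IH; rewrite map_cat sumn_cat IH. Qed.

Lemma sum_filter0 (T : Type) (P : pred T) (f : T -> nat) l :
  (forall x, ~~ P x -> f x = 0) -> sumn (map f (filter P l)) = sumn (map f l).
Proof.
move=> H; elim: l => //= x l IH; case: ifP => Px /=; rewrite IH //.
by rewrite H ?Px.
Qed.

Lemma sum_mapD (T : Type) (f g : T -> nat) l :
  sumn [seq f x + g x | x <- l] = sumn (map f l) + sumn (map g l).
Proof. by elim: l => //= x l ->; rewrite addnACA. Qed.

Lemma hdag_dag (S : eqType) (t : tree S) : hdag_size t <= dag_size t.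
Proof.
rewrite /hdag_size /bdag_forest_size /dag_size.
apply: leq_trans (sum_undup_le _ _) _.
rewrite sum_flat -!map_comp.
rewrite -[X in _ <= X](@sum_filter0 _ (fun s => children s != [::])); last first.
  by move=> x /=; rewrite negbK => /eqP ->.
rewrite leq_eqVlt; apply/orP; left; apply/eqP; congr sumn; apply/eq_in_map.
by move=> s; rewrite mem_filter => /andP [H _]; rewrite /= -(rho_sum H).
Qed.

Lemma hdag_bdag (S : eqType) (t : tree S) : hdag_size t <= bdag_size t.
Proof.
rewrite /hdag_size /bdag_size /bdag_forest_size.
set Z := flatten [seq bsubtrees b | b <- [:: fcns [:: t]]].
set Y := flatten _.
have sub : {subset Y <= map (@h1 S) (undup Z) ++ map (@h2 S) (undup Z)}.
  move=> y /flatten_mapP [b /mapP [s]]; rewrite mem_filter mem_undup => /andP [int st] -> yb.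
  have [us Hus] : exists us, fcns (s :: us) \in bsubtrees (fcns [:: t]).
    by apply: K; rewrite /flat /= cats0.
  have HZ' : {subset bsubtrees (fcns [:: t]) <= Z} by move=> x; rewrite /Z /= cats0.
  have HZ := HZ' _ Hus.
  move: yb int; case: s Hus HZ st => a cs Hus HZ _ yb int.
  move: yb; rewrite /fcns_rho' /= cats0 in_cons => /orP [/eqP ->|].
    rewrite mem_cat; apply/orP; left; apply/mapP; exists (fcns (Node a cs :: us)).
      by rewrite mem_undup.
    by rewrite /h1 unfcnsK /= int.
  move=> /chain_sub [i]; rewrite size_map => Hi ->.
  rewrite mem_cat; apply/orP; right; apply/mapP; exists (fcns (drop i cs)).
    rewrite mem_undup; apply/HZ'/(bsub_trans Hus); rewrite fcns_cons /= in_cons mem_cat.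
    by rewrite drop_in ?orbT.
  by rewrite /h2 unfcnsK map_drop.
apply: leq_trans (sum_undup_sub _ sub) _.
apply: leq_trans (sum_undup_le _ _) _.
rewrite map_cat sumn_cat -!map_comp -sum_mapD.
by rewrite (eq_map (@bout_h S)).
Qed.

Theorem theorem1 (Sigma : finType) (t : tree Sigma) :
  hdag_size t <= minn (dag_size t) (bdag_size t).
Proof. by rewrite leq_min hdag_dag hdag_bdag. Qed.
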